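(* There is an absolute constant $\epsilon_0\in(0,\frac14]$ such that for all sufficiently large even $d$ and every $i\in[\frac d2]$, the function $f_i:\{0,1\}^d\to\{0,1\}$ defined by $f_i(x)=1$ if $|x|>\frac d2+\sqrt d$, $f_i(x)=0$ if $|x|<\frac d2-\sqrt d$, and $f_i(x)=x_i\oplus x_{i+d/2}$ otherwise, is $\epsilon_0$-far from unate.
   Context: $|x|$ is the number of coordinates of $x\in\{0,1\}^d$ equal to $1$; $\oplus$ is XOR. A function $f:\{0,1\}^d\to\mathbb{R}$ is unate if each dimension $i\in[d]$ can be assigned a direction up or down such that: if up, $f(x)\le f(x+e_i)$ for all $x$ with $x_i=0$ (here $x+e_i$ is $x$ with the $i$-th bit set to 1); if down, $f(x)\ge f(x+e_i)$ for all such $x$. The distance between two functions is the fraction of points where they differ; $f$ is $\epsilon$-far from unate if its distance to every unate function is at least $\epsilon$. *)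

(* Defs.v *)
From HB Require Import structures.
From mathcomp Require Import all_boot all_order all_algebra.
Set Implicit Arguments. Unset Strict Implicit. Unset Printing Implicit Defensive.
Import Order.TTheory GRing.Theory Num.Theory.

Definition cube (d : nat) := {ffun 'I_d -> bool}.

Definition weight d (x : cube d) : nat := #|[set j | x j]|.

Definition setbit d (x : cube d) (j : 'I_d) : cube d :=
  [ffun k => if k == j then true else x k].

(* Coordinate n of x (as a nat index); false if n >= d. *)
Definition bit d (x : cube d) (n : nat) : bool :=
  [exists j : 'I_d, (nat_of_ord j == n) && x j].

Definition unate (R : realFieldType) d (g : cube d -> R) : Prop :=
  exists dir : 'I_d -> bool, forall (x : cube d) (j : 'I_d), x j = false ->
    if dir j then (g x <= g (setbit x j))%R else (g (setbit x j) <= g x)%R.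

Definition dist (R : realFieldType) d (f g : cube d -> R) : rat :=
  (#|[set x : cube d | f x != g x]|%:R / (2 ^ d)%:R)%R.

(* The function f_i (0-indexed i < d/2, uses coordinates i and i + d/2).
   |x| > d/2 + sqrt d  <->  d/2 < |x| /\ d < (|x| - d/2)^2
   |x| < d/2 - sqrt d  <->  |x| < d/2 /\ d < (d/2 - |x|)^2        *)
Definition f_i d (i : nat) (x : cube d) : bool :=
  let w := weight x in
  if (d./2 < w) && (d < (w - d./2) ^ 2) then true
  else if (w < d./2) && (d < (d./2 - w) ^ 2) then false
  else bit x i (+) bit x (i + d./2).

(* Main.v *)
Require Import Defs.
From HB Require Import structures.
From mathcomp Require Import all_boot all_order all_algebra.
From mathcomp Require Import zify ring lra.
Import Order.TTheory GRing.Theory Num.Theory.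

Lemma cnt d (P : 'I_d -> pred bool) :
  #|[set x : cube d | [forall j, P j (x j)]]| = \prod_j #|P j|.
Proof.
have -> : [set x : cube d | [forall j, P j (x j)]] = [set x in family P].
  by apply/setP=> x; rewrite !inE.
by rewrite cardsE card_family /image_mem foldrE big_map big_enum.
Qed.

Lemma cnt1 d (j : 'I_d) : #|[set x : cube d | x j]| = 2 ^ d.-1.
Proof.
pose P (k : 'I_d) : pred bool := if k == j then pred1 true else predT.
have -> : [set x : cube d | x j] = [set x : cube d | [forall k, P k (x k)]].
  apply/setP=> x; rewrite !inE; apply/idP/forallP.
    move=> xj k; rewrite /P; case: eqP => [->|_] //=; by rewrite xj.
  by move=> H; have := H j; rewrite /P eqxx /= => /eqP.
rewrite cnt (bigD1 j) //= /P eqxx.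
have -> : #|pred1 true| = 1 by rewrite card1.
rewrite mul1n (eq_bigr (fun _ => 2)); last first.
  by move=> k /negbTE ->; rewrite card_bool.
rewrite prod_nat_const; congr (_ ^ _); rewrite -[in RHS](card_ord d) -(cardC1 j); apply: eq_card => k; by rewrite !inE.
Qed.

Lemma cnt2 d (j l : 'I_d) : l != j ->
  #|[set x : cube d | x j && x l]| = 2 ^ d.-2.
Proof.
move=> lj.
pose P (k : 'I_d) : pred bool := if (k == j) || (k == l) then pred1 true else predT.
have -> : [set x : cube d | x j && x l] = [set x : cube d | [forall k, P k (x k)]].
  apply/setP=> x; rewrite !inE; apply/idP/forallP.
    move=> /andP[xj xl] k; rewrite /P; case: eqP => [->|_] /=; first by rewrite xj.
    by case: eqP => [->|_] //=; rewrite xl.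
  move=> H; have := H j; have := H l; rewrite /P eqxx orbT eqxx /=.
  by move=> /eqP -> /eqP ->.
rewrite cnt (bigD1 j) //= /P eqxx /= (bigD1 l) //= eqxx orbT.
have -> : #|pred1 true| = 1 by rewrite card1.
rewrite !mul1n (eq_bigr (fun _ => 2)); last first.
  by move=> k /andP[/negbTE -> /negbTE ->]; rewrite card_bool.
rewrite prod_nat_const; congr (_ ^ _).
have H := cardC1 j; rewrite (cardD1 l) card_ord in H.
have -> : #|(fun i : 'I_d => (i != j) && (i != l))| = #|[predD1 predC1 j & l]|.
  by apply: eq_card => k; rewrite !inE andbC.
move: H; rewrite !inE lj /= => H; by rewrite -[d.-2]/(d.-1.-1) -H.
Qed.

Lemma sumb (T : finType) (b : pred T) : \sum_x (b x : nat) = #|[set x | b x]|.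
Proof.
rewrite -sum1_card [RHS]big_mkcond /=; apply: eq_bigr => x _; rewrite inE.
by case: (b x).
Qed.

Lemma weightE d (x : cube d) : weight x = \sum_j (x j : nat).
Proof. by rewrite /weight -sumb. Qed.

Lemma S1 d : \sum_(x : cube d) weight x = d * 2 ^ d.-1.
Proof.
rewrite (eq_bigr _ (fun x _ => weightE _ x)) exchange_big /=.
rewrite (eq_bigr (fun _ => 2 ^ d.-1)); last by move=> j _; rewrite sumb cnt1.
by rewrite sum_nat_const card_ord.
Qed.

Lemma S2 d : \sum_(x : cube d) weight x ^ 2 = d * 2 ^ d.-1 + d * d.-1 * 2 ^ d.-2.
Proof.
have E : forall x : cube d, weight x ^ 2 = \sum_j \sum_k ((x j && x k) : nat).
  move=> x; rewrite (weightE _ x) -mulnn big_distrl /=; apply: eq_bigr => j _.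
  rewrite big_distrr /=; apply: eq_bigr => k _.
  by case: (x j); case: (x k).
rewrite (eq_bigr _ (fun x _ => E x)) exchange_big /=.
rewrite (eq_bigr (fun _ => 2 ^ d.-1 + d.-1 * 2 ^ d.-2)).
  by rewrite sum_nat_const card_ord mulnDr mulnA.
move=> j _; rewrite exchange_big /= (bigD1 j) //=.
rewrite [X in _ + X](eq_bigr (fun _ => 2 ^ d.-2)); last first.
  by move=> k kj; rewrite sumb cnt2.
rewrite sumb (eq_card (B := [set x : cube d | x j])); last first.
  by move=> x; rewrite !inE andbb.
by rewrite cnt1 sum_nat_const cardC1 card_ord.
Qed.

Definition sq d (I J : 'I_d) (x : cube d) (a c : bool) : cube d :=
  [ffun k => if k == I then a else if k == J then c else x k].
Arguments sq {d}.

Section Sq.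
Variables (d : nat) (I J : 'I_d).
Hypothesis IJ : I != J.

Lemma sqI x a c : sq I J x a c I = a.
Proof. by rewrite ffunE eqxx. Qed.
Lemma sqJ x a c : sq I J x a c J = c.
Proof. by rewrite ffunE eq_sym (negbTE IJ) eqxx. Qed.
Lemma sq_id x : sq I J x (x I) (x J) = x.
Proof.
apply/ffunP=> k; rewrite ffunE.
by case: (eqVneq k I) => [->|_] //; case: (eqVneq k J) => [->|].
Qed.
Lemma sq_sq x a c a' c' : sq I J (sq I J x a c) a' c' = sq I J x a' c'.
Proof. by apply/ffunP=> k; rewrite !ffunE; case: (k == I) => //; case: (k == J). Qed.
Lemma setbit_sq x c : setbit (sq I J x false c) I = sq I J x true c.
Proof. by apply/ffunP=> k; rewrite !ffunE; case: eqP. Qed.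

Lemma weight_sq x a c :
  weight (sq I J x a c) + x I + x J = weight x + a + c.
Proof.
have split3 : forall y : cube d, weight y =
    y I + (y J + \sum_(k | (k != I) && (k != J)) (y k : nat)).
  move=> y; rewrite weightE (bigD1 I) //=; congr (_ + _).
  by rewrite (bigD1 J) //= eq_sym.
rewrite !split3 sqI sqJ.
set S := \sum_(k | _) (x k : nat).
have -> : \sum_(k | (k != I) && (k != J)) (sq I J x a c k : nat) = S.
  by apply: eq_bigr => k /andP[/negbTE kI /negbTE kJ]; rewrite ffunE kI kJ.
lia.
Qed.
End Sq.

Lemma bitE d (x : cube d) (j : 'I_d) : bit x j = x j.
Proof.
apply/existsP/idP => [[k /andP[/eqP kj xk]]|xj].
  by have -> : j = k by apply: val_inj.
by exists j; rewrite eqxx.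
Qed.

Lemma f_band d i (x : cube d) s : s ^ 2 <= d ->
  weight x - d./2 <= s -> d./2 - weight x <= s ->
  f_i i x = bit x i (+) bit x (i + d./2).
Proof.
move=> sd h1 h2; rewrite /f_i.
have -> : (d < (weight x - d./2) ^ 2) = false.
  by apply/negbTE; rewrite -leqNgt (leq_trans _ sd) // leq_sqr.
have -> : (d < (d./2 - weight x) ^ 2) = false.
  by apply/negbTE; rewrite -leqNgt (leq_trans _ sd) // leq_sqr.
by rewrite !andbF.
Qed.

Lemma sqrt_ex d : exists s, s ^ 2 <= d < s.+1 ^ 2.
Proof.
elim: d => [|d [s /andP[h1 h2]]]; first by exists 0.
case: (leqP (s.+1 ^ 2) d.+1) => h3.
  exists s.+1; rewrite h3 /=. rewrite !expnS !expn0 !muln1 in h2 h3 *. nia.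
by exists s; rewrite h3 andbT; apply: leq_trans h1 _.
Qed.

Theorem claim12 :
  exists eps0 : rat, (0 < eps0)%R /\ (eps0 <= 1 / 4)%R /\
  exists D : nat, forall d : nat, D <= d -> ~~ odd d ->
    forall i : nat, i < d./2 ->
    forall (R : realFieldType) (g : cube d -> R), unate g ->
      (eps0 <= dist (fun x => ((f_i i x : nat)%:R : R)) g)%R.
Proof.
exists (1 / 8%:R)%R; split; first by rewrite divr_gt0 ?ltr0n.
split; first by rewrite ler_pM2l // lef_pV2 ?posrE ?ler_nat ?ltr0n.
exists 36 => d Hd ev i hi R g [dir Hdir].
set h := d./2 in hi *.
have dh : d = h + h.
  by have := odd_double_half d; rewrite (negbTE ev) add0n -addnn.
have [s /andP[s1 s2]] := sqrt_ex d.
have s6 : 6 <= s.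
  rewrite leqNgt; apply/negP => sl.
  have : s.+1 ^ 2 <= 36 by rewrite (@leq_exp2r _ 6 2).
  lia.
have id : i < d by lia.
have jd : i + h < d by lia.
pose I := Ordinal id. pose J := Ordinal jd.
have IJ : I != J by apply/eqP => /(congr1 val) /=; lia.
have bI (y : cube d) : bit y i = y I := bitE _ y I.
have bJ (y : cube d) : bit y (i + d./2) = y J := bitE _ y J.
set Bad := [set x : cube d | (((f_i i x : nat)%:R : R) != g x)%R].
set M := [set x : cube d | (weight x - h <= s - 2) && (h - weight x <= s - 2)].
have C1 : #|M| <= 4 * #|Bad|.
  have sub : M \subset (fun p : cube d * (bool * bool) => sq I J p.1 p.2.1 p.2.2)
                 @: setX Bad [set: bool * bool].
    apply/subsetP => x; rewrite inE => /andP[m1 m2].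
    have band a c : f_i i (sq I J x a c) = a (+) c.
      rewrite (@f_band d i _ s) // ?bI ?bJ ?sqI ?sqJ //.
        have := @weight_sq d I J IJ x a c; have := leq_b1 a; have := leq_b1 c.
        have := leq_b1 (x I); have := leq_b1 (x J); lia.
      have := @weight_sq d I J IJ x a c; have := leq_b1 a; have := leq_b1 c.
      have := leq_b1 (x I); have := leq_b1 (x J); lia.
    case: (boolP [exists p : bool * bool, sq I J x p.1 p.2 \in Bad]).
      move=> /existsP [[a c] /= yB]; apply/imsetP.
      exists (sq I J x a c, (x I, x J)); first by rewrite inE yB inE.
      by rewrite /= sq_sq sq_id.
    rewrite negb_exists => /forallP H.
    have E a c : g (sq I J x a c) = (((a (+) c : nat)%:R : R))%R.
      have := H (a, c); rewrite /= inE negbK band => /eqP <-.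
      by [].
    exfalso.
    have := Hdir (sq I J x false true) I; rewrite sqI => /(_ erefl).
    have := Hdir (sq I J x false false) I; rewrite sqI => /(_ erefl).
    rewrite !setbit_sq !E /=.
    case: (dir I); rewrite ?ler10 //.
  apply: leq_trans (subset_leq_card sub) _.
  apply: leq_trans (leq_imset_card _ _) _.
  by rewrite cardsX cardsT card_prod card_bool mulnC.
pose D (x : cube d) := (weight x - h) ^ 2 + (h - weight x) ^ 2.
have key x : D x + 2 * h * weight x = weight x ^ 2 + h ^ 2.
  rewrite /D; move: (weight x) => w; rewrite -!mulnn.
  case: (leqP h w) => hw.
    have [k ->] : exists k, w = h + k by exists (w - h); lia.
    rewrite addKn (_ : h - (h + k) = 0); last by lia.
    nia.
  have [k ->] : exists k, h = w + k by exists (h - w); lia.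
  rewrite addKn (_ : w - (w + k) = 0); last by lia.
  nia.
have cardT : #|[set: cube d]| = 2 ^ d by rewrite cardsT card_ffun card_bool card_ord.
have Dsum : \sum_x D x + 2 * h * (d * 2 ^ d.-1) =
    d * 2 ^ d.-1 + d * d.-1 * 2 ^ d.-2 + 2 ^ d * h ^ 2.
  have E : \sum_(x : cube d) (D x + 2 * h * weight x) =
           \sum_(x : cube d) (weight x ^ 2 + h ^ 2).
    by apply: eq_bigr => x _; exact: key.
  move: E; rewrite !big_split /= -big_distrr /= S1 S2 sum_nat_const.
  by rewrite -cardsT cardT => ->; rewrite mulnC.
have Cheb : #|~: M| * (s - 1) ^ 2 <= \sum_x D x.
  rewrite (bigID (mem (~: M))) /=.
  apply: leq_trans (leq_addr _ _).
  rewrite -sum_nat_const; apply: leq_sum => x; rewrite !inE => /negP nM.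
  rewrite /D.
  case: (leqP (s - 1) (weight x - h)) => c1.
    apply: leq_trans (leq_addr _ _); by rewrite leq_sqr.
  case: (leqP (s - 1) (h - weight x)) => c2.
    apply: leq_trans (leq_addl _ _); by rewrite leq_sqr.
  exfalso; apply: nM; apply/andP; split; lia.
have cM : #|M| + #|~: M| = 2 ^ d by rewrite cardsC -cardT cardsT.
have [n dn] : exists n, d = n.+2 by exists (d - 2); lia.
have e1 : 2 ^ d.-1 = 2 * 2 ^ d.-2 by rewrite dn /= expnS.
have e2 : 2 ^ d = 4 * 2 ^ d.-2 by rewrite dn /= !expnS mulnA.
have e3 : d.-1 = h + h - 1 by rewrite -subn1 dh.
have t1 : h + 1 <= (s - 1) ^ 2.
  have [v sv] : exists v, s = v + 6 by exists (s - 6); lia.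
  have -> : s - 1 = v + 5 by lia.
  have : h + h < (v + 7) * (v + 7) by rewrite -dh (_ : v + 7 = s.+1) ?mulnn //; lia.
  rewrite -mulnn; lia.
have [m hm] : exists m, h = m.+1 by exists h.-1; lia.
move: Dsum Cheb cM; set S := \sum_x D x; move=> Dsum Cheb cM.
rewrite e1 e2 in Dsum cM; move: Dsum cM.
set q := 2 ^ d.-2; move=> Dsum cM.
have Dq : S = 2 * h * q.
  move: Dsum; rewrite e3 (_ : h + h - 1 = m + m + 1); last by lia.
  move: (d) dh => d' ->.
  rewrite hm -mulnn; lia.
set C := #|~: M| in Cheb cM.
have t2 : C * (h + 1) <= 2 * h * q.
  by rewrite -Dq; apply: leq_trans Cheb; rewrite leq_mul2l t1 orbT.
have t3 : C <= 2 * q.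
  rewrite leqNgt; apply/negP => lt.
  have := leq_mul lt (leqnn (h + 1)); lia.
have fin : 2 ^ d <= 8 * #|Bad| by rewrite e2; lia.
rewrite /dist ler_pdivlMr ?ltr0n ?expn_gt0 //.
have : ((2 ^ d)%:R <= 8%:R * (#|Bad|%:R) :> rat)%R.
  by rewrite -natrM ler_nat.
rewrite -/Bad; lra.
Qed.
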